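(* Consider the following group-based qualification system (the 2018 FIFA World Cup qualification format, European zone). There are $k=9$ groups of $6$ teams each; within each group every pair of teams plays a home and an away match. A win gives $3$ points, a draw $1$, a loss $0$. In each group teams are ranked by: (1) points, (2) goal difference (goals scored minus goals conceded) over all group matches, (3) goals scored over all group matches, then by any further fixed tie-breaking rules producing a strict order. Group winners are directly qualified ($\mathcal{R}=2$); teams ranked third to sixth are eliminated ($\mathcal{R}=0$). The nine runners-up form the repechage group; each runner-up is evaluated only on its $8$ matches against the teams ranked first to fifth in its group (the two matches against the sixth-placed team are discarded), and the runners-up are ranked by (1) points, (2) goal difference, (3) goals scored, computed over these $8$ matches, then by further fixed tie-breaking rules. The eight best runners-up advance to the play-offs ($\mathcal{R}=1$) and the worst runner-up is eliminated ($\mathcal{R}=0$). Then this system is not strategy-proof: there exist a team $x$ in some group and two sets of group results $V,\bar V$ that coincide except that in one match of $x$ the opponent scores more goals against $x$ under $\bar V$ than under $V$, such that $\mathcal{R}(V,x)=0$ and $\mathcal{R}(\bar V,x)=1$.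
   Context: $\mathcal{R}(V,x)\in\{0,1,2\}$ denotes the outcome for team $x$ under the full set of match results $V$ of all nine groups: $2$ = directly qualified, $1$ = advanced to the play-offs, $0$ = eliminated. A set of group results records, for every ordered pair $(x,y)$ of distinct teams of the same group, the numbers of goals scored by the home team $x$ and the away team $y$ in their match at $x$'s home. *)

(* Defs.v *)
From HB Require Import structures.
From mathcomp Require Import all_boot all_order all_algebra.
Set Implicit Arguments. Unset Strict Implicit. Unset Printing Implicit Defensive.
Import Order.TTheory GRing.Theory Num.Theory.

Definition team := ('I_9 * 'I_6)%type.

(* A set of group results: V g x y = (goals of home team x, goals of away
   team y) in the match of group g played at x's home (only x <> y matters). *)
Definition results := 'I_9 -> 'I_6 -> 'I_6 -> nat * nat.

Definition match_pts (a b : nat) : nat :=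
  if b < a then 3 else if a == b then 1 else 0.

Definition pts_on (V : results) (g : 'I_9) (i : 'I_6) (P : pred 'I_6) : nat :=
  \sum_(y < 6 | (y != i) && P y)
     (match_pts (V g i y).1 (V g i y).2 + match_pts (V g y i).2 (V g y i).1).
Definition gs_on (V : results) (g : 'I_9) (i : 'I_6) (P : pred 'I_6) : nat :=
  \sum_(y < 6 | (y != i) && P y) ((V g i y).1 + (V g y i).2).
Definition gc_on (V : results) (g : 'I_9) (i : 'I_6) (P : pred 'I_6) : nat :=
  \sum_(y < 6 | (y != i) && P y) ((V g i y).2 + (V g y i).1).
Definition gd_on (V : results) (g : 'I_9) (i : 'I_6) (P : pred 'I_6) : int :=
  ((gs_on V g i P)%:Z - (gc_on V g i P)%:Z)%R.

Definition lex_better (p1 p2 : nat) (d1 d2 : int) (s1 s2 : nat) (t1 t2 : nat)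
  : bool :=
  (p2 < p1) || ((p1 == p2) &&
    ((d2 < d1)%R || ((d1 == d2) && ((s2 < s1) || ((s1 == s2) && (t2 < t1)))))).

(* Further tie-breaking rules: arbitrary (possibly result-dependent) values,
   required to be injective (so that the ranking is strict). *)
Definition group_tb := results -> 'I_9 -> 'I_6 -> nat.
Definition rep_tb := results -> 'I_9 -> nat.

Definition group_better (tb : group_tb) (V : results) (g : 'I_9) (i j : 'I_6)
  : bool :=
  lex_better (pts_on V g i predT) (pts_on V g j predT)
             (gd_on V g i predT) (gd_on V g j predT)
             (gs_on V g i predT) (gs_on V g j predT)
             (tb V g i) (tb V g j).

(* position in the group: 0 = first, 1 = second (runner-up), ..., 5 = sixth *)
Definition position (tb : group_tb) (V : results) (g : 'I_9) (i : 'I_6) : nat :=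
  #|[pred j : 'I_6 | group_better tb V g j i]|.

Definition top5 (tb : group_tb) (V : results) (g : 'I_9) : pred 'I_6 :=
  fun y => position tb V g y < 5.

Definition rep_better (tb : group_tb) (rtb : rep_tb) (V : results)
  (g : 'I_9) (i : 'I_6) (h : 'I_9) (j : 'I_6) : bool :=
  lex_better (pts_on V g i (top5 tb V g)) (pts_on V h j (top5 tb V h))
             (gd_on V g i (top5 tb V g)) (gd_on V h j (top5 tb V h))
             (gs_on V g i (top5 tb V g)) (gs_on V h j (top5 tb V h))
             (rtb V g) (rtb V h).

Definition rep_count (tb : group_tb) (rtb : rep_tb) (V : results)
  (g : 'I_9) (i : 'I_6) : nat :=
  #|[pred h : 'I_9 | (h != g) &&
      [exists j : 'I_6, (position tb V h j == 1) && rep_better tb rtb V h j g i]]|.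

Definition outcome (tb : group_tb) (rtb : rep_tb) (V : results) (x : team)
  : nat :=
  let g := x.1 in let i := x.2 in
  if position tb V g i == 0 then 2
  else if position tb V g i == 1 then
    (if rep_count tb rtb V g i < 8 then 1 else 0)
  else 0.

Definition concede_more (x : team) (V Vbar : results) : Prop :=
  exists y : 'I_6, y != x.2 /\
   ( ((Vbar x.1 x.2 y).1 = (V x.1 x.2 y).1 /\ (V x.1 x.2 y).2 < (Vbar x.1 x.2 y).2
      /\ forall g a b, (g, a, b) <> (x.1, x.2, y) -> Vbar g a b = V g a b)
   \/ ((Vbar x.1 y x.2).2 = (V x.1 y x.2).2 /\ (V x.1 y x.2).1 < (Vbar x.1 y x.2).1
      /\ forall g a b, (g, a, b) <> (x.1, y, x.2) -> Vbar g a b = V g a b)).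

(* Main.v *)
Require Import Defs.
From mathcomp Require Import all_boot all_order all_algebra.
From Stdlib Require Import FunctionalExtensionality.

Definition base (a b : nat) : nat * nat := if a < b then (1,0) else (0,1).
Definition res0 (a b : nat) : nat * nat :=
  match a, b with
  | 0, 5 => (4,0) | 1, 4 => (5,0) | 1, 5 => (0,1) | 5, 1 => (1,0)
  | 3, 2 => (1,1) | _, _ => base a b end.
Definition resO (a b : nat) : nat * nat :=
  match a, b with | 2, 1 => (1,1) | _, _ => base a b end.
Definition VV : results := fun g a b =>
  if (g : nat) == 0 then res0 a b else resO a b.
Definition VB : results := fun g a b =>
  if [&& (g : nat) == 0, (a : nat) == 1 & (b : nat) == 4] then (5,2) else VV g a b.

Definition L6 : seq 'I_6 := [:: @Ordinal 6 0 isT; @Ordinal 6 1 isT; @Ordinal 6 2 isT; @Ordinal 6 3 isT; @Ordinal 6 4 isT; @Ordinal 6 5 isT].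
Definition L9 : seq 'I_9 := [:: @Ordinal 9 0 isT; @Ordinal 9 1 isT; @Ordinal 9 2 isT; @Ordinal 9 3 isT; @Ordinal 9 4 isT; @Ordinal 9 5 isT; @Ordinal 9 6 isT; @Ordinal 9 7 isT; @Ordinal 9 8 isT].
Lemma fe6 : Finite.enum 'I_6 = L6.
Proof. apply: (inj_map val_inj). by rewrite -enumT val_enum_ord. Qed.
Lemma fe9 : Finite.enum 'I_9 = L9.
Proof. apply: (inj_map val_inj). by rewrite -enumT val_enum_ord. Qed.
Lemma ie6 : index_enum 'I_6 = L6.
Proof. by rewrite /index_enum unlock fe6. Qed.
Lemma ie9 : index_enum 'I_9 = L9.
Proof. by rewrite /index_enum unlock fe9. Qed.
Lemma card6 (A : pred 'I_6) : #|A| = count A L6.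
Proof. by rewrite unlock /enum_mem size_filter fe6. Qed.
Lemma card9 (A : pred 'I_9) : #|A| = count A L9.
Proof. by rewrite unlock /enum_mem size_filter fe9. Qed.

Lemma position_neq tb V g i :
  position tb V g i = #|[pred j : 'I_6 | (j != i) && group_better tb V g j i]|.
Proof.
apply: eq_card => j; rewrite !inE; case: eqVneq => // ->.
by rewrite /group_better /lex_better !ltnn !eqxx Order.POrderTheory.ltxx.
Qed.

Lemma position_fun : position =
  fun tb V g i => #|[pred j : 'I_6 | (j != i) && group_better tb V g j i]|.
Proof.
do 4 (apply: functional_extensionality => ?); exact: position_neq.
Qed.

Theorem corollary3p1 (tb : group_tb) (rtb : rep_tb)
  (tb_inj : forall V g, injective (tb V g))
  (rtb_inj : forall V, injective (rtb V)) :
  exists (x : team) (V Vbar : results),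
    concede_more x V Vbar /\ outcome tb rtb V x = 0 /\ outcome tb rtb Vbar x = 1.
Proof.
exists (ord0, @Ordinal 6 1 isT), VV, VB; split; last split.
- exists (@Ordinal 6 4 isT); split; first by [].
  left; rewrite /VB /=; split; first by [].
  split; first by [].
  move=> g a b H; case: ifP => // /and3P [/eqP g0 /eqP a1 /eqP b4].
  exfalso; apply: H; congr (_,_,_); by apply/val_inj.
- rewrite /outcome /rep_count /rep_better /top5 position_fun /group_better /lex_better
    /gd_on /gs_on /gc_on /pts_on.
  generalize (tb VV) (rtb VV) (tb VB) (rtb VB) => t1 r1 t2 r2.
  rewrite /FiniteQuant.quant0b /pred0b !unlock /enum_mem ?ie6 ?ie9 ?fe6 ?fe9.
  vm_compute. reflexivity.
- rewrite /outcome /rep_count /rep_better /top5 position_fun /group_better /lex_better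
    /gd_on /gs_on /gc_on /pts_on.
  generalize (tb VV) (rtb VV) (tb VB) (rtb VB) => t1 r1 t2 r2.
  rewrite /FiniteQuant.quant0b /pred0b !unlock /enum_mem ?ie6 ?ie9 ?fe6 ?fe9.
  vm_compute. reflexivity.
Qed.
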